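(* Let $\mathcal{M}=(E,\rho)$ be a $q$-matroid and $\mathcal{Z}=\mathcal{Z}(\mathcal{M})$. Then for all subspaces $V\le E$, \[ \rho(V)=\min_{Z\in\mathcal{Z}}\Big(\rho(Z)+\dim\big((V+Z)/Z\big)\Big). \]
   Context: Let $\mathbb{F}=\mathbb{F}_q$, $E$ a finite-dimensional $\mathbb{F}$-vector space. A $q$-matroid is $\mathcal{M}=(E,\rho)$ with $\rho$ from subspaces of $E$ to $\mathbb{Z}_{\ge0}$ satisfying $0\le\rho(V)\le\dim V$, monotonicity, and submodularity $\rho(V+W)+\rho(V\cap W)\le\rho(V)+\rho(W)$. A flat is $F$ with $\rho(F+\langle x\rangle)>\rho(F)$ for all $x\in E\setminus F$. The cyclic core is $\mathrm{cyc}(V)=\{x\in V\mid\rho(W)=\rho(V)\text{ for all }W\le V\text{ with }W+\langle x\rangle=V\}$; $V$ is cyclic if $\mathrm{cyc}(V)=V$. $\mathcal{Z}(\mathcal{M})$ is the set of cyclic flats. *)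

(* Defs.v *)
From HB Require Import structures.
From mathcomp Require Import all_boot all_order all_algebra all_field.
Set Implicit Arguments. Unset Strict Implicit. Unset Printing Implicit Defensive.
Import GRing.Theory.
Local Open Scope ring_scope.

Section QMatroid.
Variables (F : finFieldType) (E : vectType F).

Definition is_qmatroid (rho : {vspace E} -> nat) : Prop :=
  [/\ (forall V : {vspace E}, (rho V <= \dim V)%N),
      (forall V W : {vspace E}, (V <= W)%VS -> (rho V <= rho W)%N) &
      (forall V W : {vspace E},
          (rho (V + W)%VS + rho (V :&: W)%VS <= rho V + rho W)%N)].

Definition is_flat (rho : {vspace E} -> nat) (Fl : {vspace E}) : Prop :=
  forall x : E, x \notin Fl -> (rho Fl < rho (Fl + <[x]>)%VS)%N.

Definition in_cyc (rho : {vspace E} -> nat) (V : {vspace E}) (x : E) : Prop :=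
  x \in V /\
  forall W : {vspace E}, (W <= V)%VS -> (W + <[x]>)%VS = V -> rho W = rho V.

Definition is_cyclic (rho : {vspace E} -> nat) (V : {vspace E}) : Prop :=
  forall x : E, x \in V -> in_cyc rho V x.

Definition is_cyclic_flat (rho : {vspace E} -> nat) (Z : {vspace E}) : Prop :=
  is_cyclic rho Z /\ is_flat rho Z.

(* dim((V+Z)/Z) *)
Definition quot_dim (V Z : {vspace E}) : nat := (\dim (V + Z)%VS - \dim Z)%N.

End QMatroid.

(* Main.v *)
Require Import Defs.
From HB Require Import structures.
From mathcomp Require Import all_boot all_order all_algebra all_field.
From mathcomp Require Import zify.
From Stdlib Require Import Classical.
Set Bullet Behavior "Strict Subproofs".

Section Aux.
Variables (F : finFieldType) (E : vectType F).
Variables (rho : {vspace E} -> nat) (Hrho : is_qmatroid rho).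

Lemma rho_dim V : (rho V <= \dim V)%N.
Proof. by case: Hrho. Qed.
Lemma rho_mono V W : (V <= W)%VS -> (rho V <= rho W)%N.
Proof. by case: Hrho => _ H _; apply: H. Qed.
Lemma rho_sub V W : (rho (V + W)%VS + rho (V :&: W)%VS <= rho V + rho W)%N.
Proof. by case: Hrho => _ _ H; apply: H. Qed.

Lemma rho_unit A (x : E) : (rho (A + <[x]>)%VS <= rho A + 1)%N.
Proof.
have h1 := rho_sub A <[x]>. have h2 := rho_dim <[x]>.
rewrite dim_vline in h2. have : ((x != 0%R) <= 1)%N by case: (x != 0%R).
lia.
Qed.

Lemma bound V Z : (rho V <= rho Z + quot_dim V Z)%N.
Proof.
rewrite /quot_dim.
set C := (V :\: Z)%VS.
have hV : (V <= C + Z)%VS.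
  rewrite -{1}(addv_diff_cap V Z) /C. apply: addvS => //. exact: capvSr.
have h1 := rho_mono _ _ hV.
have h2 := rho_sub C Z.
have h3 := rho_dim C.
have h4 := dimv_cap_compl V Z.
have h5 := dimv_sum_cap V Z.
move: h1 h2 h3 h4 h5; rewrite /C; lia.
Qed.

Lemma qdim_mono (V Z Z' : {vspace E}) : (Z <= Z')%VS ->
  (\dim (V + Z') - \dim Z' <= \dim (V + Z) - \dim Z)%N.
Proof.
move=> sZ.
have e : ((V + Z) + Z' = V + Z')%VS.
  by rewrite -addvA; congr (_ + _)%VS; apply/eqP; rewrite eqEsubv addvSr subv_add sZ subvv.
have h1 := dimv_sum_cap (V + Z)%VS Z'. rewrite e in h1.
have h2 : (\dim Z <= \dim ((V + Z) :&: Z'))%N.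
  apply: dimvS. by rewrite subv_cap addvSr sZ.
have h3 := dimvS (addvSr V Z).
have h4 := dimvS (addvSr V Z').
lia.
Qed.

Definition meas (Z : {vspace E}) : nat :=
  (rho Z * (\dim (fullv : {vspace E})).+1 + (\dim (fullv : {vspace E}) - \dim Z))%N.

Lemma improve V Z : ~ is_cyclic_flat rho Z -> rho V = (rho Z + quot_dim V Z)%N ->
  exists Z', (meas Z' < meas Z)%N /\ rho V = (rho Z' + quot_dim V Z')%N.
Proof.
rewrite /is_cyclic_flat /is_cyclic /is_flat /in_cyc /quot_dim /meas => hn hf.
have hdZ := dimvS (subvf Z).
have hVZ := dimvS (addvSr V Z).
case: (not_and_or _ _ hn) => hc.
  case: (not_all_ex_not _ _ hc) => x hx0. have [xZ hx] := imply_to_and _ _ hx0.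
  case: (not_and_or _ _ hx) => // hW.
  case: (not_all_ex_not _ _ hW) => W hW0. have [sWZ hW1] := imply_to_and _ _ hW0. have [eW hr] := imply_to_and _ _ hW1.
  have r1 := rho_mono _ _ sWZ.
  have r2 := rho_unit W x. rewrite eW in r2.
  have d1 := dimv_sum_cap W <[x]>. rewrite eW in d1.
  have d2 : ((x != 0%R) <= 1)%N by case: (x != 0%R).
  rewrite dim_vline in d1.
  have d3 := dimvS (addvS (subvv V) sWZ).
  have d4 := rho_dim Z.
  have d5 := bound V W. rewrite /quot_dim in d5.
  have d6 := dimvS (subvf W).
  have lt : (rho W < rho Z)%N by rewrite ltn_neqAle r1 andbT; apply/eqP.
  exists W; split; last by lia.
  have : (rho W * (\dim (fullv : {vspace E})).+1 + (\dim (fullv : {vspace E})).+1 <=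
          rho Z * (\dim (fullv : {vspace E})).+1)%N.
    by rewrite -mulSnr leq_mul2r lt orbT.
  lia.
- case: (not_all_ex_not _ _ hc) => x hx0. have [xZ hx] := imply_to_and _ _ hx0.
  have r1 := rho_mono _ _ (addvSl Z <[x]>).
  have req : rho (Z + <[x]>)%VS = rho Z by lia.
  have hlt : (\dim Z < \dim (Z + <[x]>))%N.
    rewrite (ltn_leqif (dimv_leqif_eq (addvSl Z <[x]>))).
    apply/eqP => e; move/negP: xZ; apply; rewrite e.
    exact: (subvP (addvSr Z <[x]>) x (memv_line x)).
  have d1 := dimvS (subvf (Z + <[x]>)%VS).
  have d2 := qdim_mono V Z (Z + <[x]>)%VS (addvSl Z <[x]>).
  have d5 := bound V (Z + <[x]>)%VS. rewrite /quot_dim in d5.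
  exists (Z + <[x]>)%VS; rewrite req; split; lia.
Qed.

Lemma step V k : forall Z, (meas Z <= k)%N -> rho V = (rho Z + quot_dim V Z)%N ->
  exists2 Z' : {vspace E}, is_cyclic_flat rho Z' & rho V = (rho Z' + quot_dim V Z')%N.
Proof.
elim: k => [|k IH] Z hm hf.
- case: (classic (is_cyclic_flat rho Z)) => hc; first by exists Z.
  case: (improve V Z hc hf) => Z' [lt _]. lia.
- case: (classic (is_cyclic_flat rho Z)) => hc; first by exists Z.
  case: (improve V Z hc hf) => Z' [lt h]. apply: (IH Z') => //. lia.
Qed.

End Aux.

Theorem corollary4p6 (F : finFieldType) (E : vectType F)
  (rho : {vspace E} -> nat) (Hrho : is_qmatroid rho) (V : {vspace E}) :
  (exists2 Z : {vspace E}, is_cyclic_flat rho Z & rho V = (rho Z + quot_dim V Z)%N) /\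
  (forall Z : {vspace E}, is_cyclic_flat rho Z -> (rho V <= rho Z + quot_dim V Z)%N).
Proof.
split; last by move=> Z _; apply: bound.
apply: (@step F E rho Hrho V _ V (leqnn _)).
by rewrite /quot_dim addvv subnn addn0.
Qed.
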